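(* For every integer $k\ge1$ and every $\tau\in T$: if $\mathfrak{h}(\tau)=k$ then $\rho(\tau)\ge\frac k2$; if $\mathfrak{r}(\tau)=k$ then $\rho(\tau)\ge k-\frac12$; if $\mathfrak{d}(\tau)=k$ then $\rho(\tau)\ge2^{k-1}-\frac12$. The same implications hold with $\tau$ replaced by $u\in U_f$ and $\mathfrak{h},\mathfrak{r},\mathfrak{d}$ replaced by $\mathfrak{h}',\mathfrak{r}',\mathfrak{d}'$.
   Context: Let $m\ge0$. $T$ is the set of $(m+1)$-colored rooted trees: the empty tree $\emptyset$ and all $\tau=[\tau_1,\dots,\tau_\kappa]_l$ with $l\in\{0,\dots,m\}$, $\kappa\ge0$, $\tau_1,\dots,\tau_\kappa\in T\setminus\{\emptyset\}$ (unordered), formed by joining the roots of the $\tau_j$ by edges to a new root of color $l$ ($\bullet_l$ when $\kappa=0$). Order: $\rho(\emptyset)=0$, $\rho([\tau_1,\dots,\tau_\kappa]_l)=\sum_j\rho(\tau_j)+1$ if $l=0$, and $=\sum_j\rho(\tau_j)+\frac12$ if $l\ge1$. $U_f$ is the set of trees $u=[\tau_1,\dots,\tau_\kappa]_f$ with $\kappa\ge0$, $\tau_j\in T\setminus\{\emptyset\}$ (a root labelled $f$), with $\rho(u)=\sum_j\rho(\tau_j)$; for $\mathfrak{g}:T\to\mathbb{N}$ put $\mathfrak{g}'(u)=\max_j\mathfrak{g}(\tau_j)$ (and $0$ for $\kappa=0$). Functions on $T$ (maxima over empty sets are $0$): height: $\mathfrak{h}(\emptyset)=0$, $\mathfrak{h}(\bullet_l)=1$,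 $\mathfrak{h}([\tau_1,\dots,\tau_\kappa]_l)=1+\max_j\mathfrak{h}(\tau_j)$; ramification: $\mathfrak{r}(\emptyset)=0$, $\mathfrak{r}(\bullet_l)=1$, $\mathfrak{r}([\tau_1]_l)=\mathfrak{r}(\tau_1)$, $\mathfrak{r}([\tau_1,\dots,\tau_\kappa]_l)=1+\max_j\mathfrak{r}(\tau_j)$ for $\kappa\ge2$; doubling index: $\mathfrak{d}(\emptyset)=0$, $\mathfrak{d}(\bullet_l)=1$, $\mathfrak{d}([\tau_1,\dots,\tau_\kappa]_l)=M$ if exactly one $i$ has $\mathfrak{d}(\tau_i)=M:=\max_j\mathfrak{d}(\tau_j)$, and $M+1$ if at least two indices $i$ have $\mathfrak{d}(\tau_i)=M$. *)

(* Defs.v *)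
From mathcomp Require Import all_boot all_order all_algebra.
Set Implicit Arguments. Unset Strict Implicit. Unset Printing Implicit Defensive.
Import Order.TTheory GRing.Theory Num.Theory.

(* Non-empty colored rooted trees: [Node l ts] = [ts_1,...,ts_k]_l.
   The list of children is ordered, but all functions below are invariant
   under permutation of the children, so this represents unordered trees. *)
Inductive ctree : Type := Node : nat -> seq ctree -> ctree.

(* A tree of T is [None] (the empty tree) or [Some t] with t non-empty. *)
Definition Ttree := option ctree.

Fixpoint colored (m : nat) (t : ctree) : bool :=
  match t with
  | Node l ts => (l <= m) &&
      (fix allc (s : seq ctree) : bool :=
         match s with [::] => true | t' :: s' => colored m t' && allc s' end) ts
  end.

Definition coloredT (m : nat) (t : Ttree) : bool :=
  if t is Some t' then colored m t' else true.

Fixpoint rho (t : ctree) : rat :=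
  match t with
  | Node l ts =>
      (fix sumr (s : seq ctree) : rat :=
         match s with [::] => 0 | t' :: s' => rho t' + sumr s' end) ts
      + (if l == 0%N then 1 else 1 / 2)%R
  end%R.

Definition rhoT (t : Ttree) : rat := if t is Some t' then rho t' else 0%R.

Definition maxl (s : seq nat) : nat := foldr maxn 0 s.

Fixpoint height (t : ctree) : nat :=
  match t with
  | Node _ ts =>
      (maxl ((fix mp (s : seq ctree) : seq nat :=
                match s with [::] => [::] | t' :: s' => height t' :: mp s' end) ts)).+1
  end.

Fixpoint ramif (t : ctree) : nat :=
  match t with
  | Node _ ts =>
      let rs := (fix mp (s : seq ctree) : seq nat :=
                   match s with [::] => [::] | t' :: s' => ramif t' :: mp s' end) ts in
      match rs with
      | [::] => 1
      | [:: r] => r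
      | _ => (maxl rs).+1
      end
  end.

Fixpoint dbl (t : ctree) : nat :=
  match t with
  | Node _ ts =>
      let ds := (fix mp (s : seq ctree) : seq nat :=
                   match s with [::] => [::] | t' :: s' => dbl t' :: mp s' end) ts in
      match ds with
      | [::] => 1
      | _ => let M := maxl ds in if (2 <= count_mem M ds)%N then M.+1 else M
      end
  end.

Definition heightT (t : Ttree) : nat := if t is Some t' then height t' else 0.
Definition ramifT (t : Ttree) : nat := if t is Some t' then ramif t' else 0.
Definition dblT (t : Ttree) : nat := if t is Some t' then dbl t' else 0.

(* Trees of U_f: u = [ts_1,...,ts_k]_f, represented by the list of children. *)
Definition Ftree := seq ctree.
Definition rhoU (u : Ftree) : rat := (\sum_(t <- u) rho t)%R.
(* g'(u) = max_j g(tau_j), 0 if no children *)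
Definition primeU (g : ctree -> nat) (u : Ftree) : nat := maxl (map g u).

(* Main.v *)
Require Import Defs.
From mathcomp Require Import all_boot all_order all_algebra.
From mathcomp Require Import lra.
From Stdlib Require List.
Import Order.TTheory GRing.Theory Num.Theory.
Local Open Scope ring_scope.

Definition ctree_ind' (P : ctree -> Prop)
  (H : forall l ts, List.Forall P ts -> P (Node l ts)) : forall t, P t :=
  fix F t := match t with
  | Node l ts => H l ts ((fix G s : List.Forall P s :=
        match s with [::] => List.Forall_nil P
        | t' :: s' => List.Forall_cons t' (F t') (G s') end) ts)
  end.

Lemma rho_node l ts : rho (Node l ts) =
  \sum_(t <- ts) rho t + (if l == 0%N then 1 else 1 / 2).
Proof.
rewrite /=; congr (_ + _); elim: ts => [|t ts IH]; first by rewrite big_nil.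
by rewrite big_cons -IH.
Qed.

Lemma height_node l ts : height (Node l ts) = (maxl (map height ts)).+1.
Proof. by rewrite /=; congr (maxl _).+1; elim: ts => //= t ts ->. Qed.

Lemma ramif_node l ts : ramif (Node l ts) =
  match map ramif ts with [::] => 1%N | [:: r] => r | _ => (maxl (map ramif ts)).+1 end.
Proof.
simpl.
suff -> : (fix mp (s : seq ctree) : seq nat := match s with [::] => [::] | t' :: s' => ramif t' :: mp s' end) ts = map ramif ts by [].
by elim: ts => //= t ts ->.
Qed.

Lemma dbl_node l ts : dbl (Node l ts) =
  match map dbl ts with [::] => 1%N
  | _ => let M := maxl (map dbl ts) in if (2 <= count_mem M (map dbl ts))%N then M.+1 else M end.
Proof.
simpl.
suff -> : (fix mp (s : seq ctree) : seq nat := match s with [::] => [::] | t' :: s' => dbl t' :: mp s' end) ts = map dbl ts by [].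
by elim: ts => //= t ts ->.
Qed.

Lemma c_ge l : 1 / 2 <= (if l == 0%N then 1 else 1 / 2 : rat).
Proof. case: (l == 0%N) => //; lra. Qed.

Lemma rho_ge t : 1 / 2 <= rho t.
Proof.
elim/ctree_ind': t => l ts IH; rewrite rho_node.
have : 0 <= \sum_(t <- ts) rho t.
  elim: ts IH => [|t ts IH2] H; first by rewrite big_nil.
  inversion H; subst. rewrite big_cons. have := IH2 H3. lra.
move: (if l == 0%N then _ else _) (c_ge l) => c Hc. lra.
Qed.

Lemma sum_ge0 (s : seq ctree) : 0 <= \sum_(t <- s) rho t.
Proof.
elim: s => [|t s IH]; first by rewrite big_nil.
rewrite big_cons; have := rho_ge t; lra.
Qed.

Lemma maxG (f : ctree -> nat) (s : seq ctree) : s <> [::] ->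
  exists t, List.In t s /\ maxl (map f s) = f t /\
    rho t + (size s).-1%:R / 2 <= \sum_(t <- s) rho t.
Proof.
elim: s => [//|x s IH] _.
case: s IH => [|y s] IH.
  exists x; split; first by left.
  by rewrite /= maxn0 big_cons big_nil; split => //; lra.
have [t [Ht [Hm Hs]]] := IH ltac:(discriminate).
rewrite /= in Hm Hs *.
rewrite big_cons.
have Hs' : (size s).+1%:R / 2 <= \sum_(t0 <- y :: s) rho t0.
  rewrite -natr1. have := rho_ge t. lra.
case: (leqP (maxl (map f (y :: s))) (f x)) => Hc.
  exists x; split; first by left.
  rewrite /= in Hc; move: Hc => /maxn_idPl Hc; split => //.
  lra.
exists t; split; first by right.
split; first exact: Hm.
rewrite -natr1. have := rho_ge x. lra.
Qed.

Lemma maxl_ge (f : ctree -> nat) s t : List.In t s -> (f t <= maxl (map f s))%N.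
Proof.
elim: s => [//|x s IH] /= [->|H]; first exact: leq_maxl.
exact: leq_trans (IH H) (leq_maxr _ _).
Qed.

Lemma cnt1 (f : ctree -> nat) M s : (1 <= count_mem M (map f s))%N ->
  exists t, List.In t s /\ f t = M /\ rho t <= \sum_(t <- s) rho t.
Proof.
elim: s => [//|x s IH] /=; rewrite big_cons.
case: eqP => [<-|_] H.
  exists x; split; first by left. split => //. have := sum_ge0 s. lra.
have [t [Ht [Hf Hr]]] := IH H. exists t; split; first by right.
split => //. have := rho_ge x. lra.
Qed.

Lemma cnt2 (f : ctree -> nat) M s : (2 <= count_mem M (map f s))%N ->
  exists t1 t2, List.In t1 s /\ List.In t2 s /\ f t1 = M /\ f t2 = M /\ rho t1 + rho t2 <= \sum_(t <- s) rho t.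
Proof.
elim: s => [//|x s IH] /=; rewrite big_cons.
case: eqP => [<-|_] H.
  have [|t [Ht [Hf Hr]]] := @cnt1 f (f x) s; first by move: H; rewrite /nat_of_bool add1n.
  exists x, t; split; first by left. split; first by right. split => //; split => //; lra.
have [t1 [t2 [I1 [I2 [H1 [H2 Hr]]]]]] := IH H. exists t1, t2.
split; first by right. split; first by right. split => //; split => //.
have := rho_ge x. lra.
Qed.

Lemma height_ge t : (height t)%:R / 2 <= rho t.
Proof.
elim/ctree_ind': t => l ts IH; rewrite rho_node height_node.
move: (if l == 0%N then _ else _) (c_ge l) => c Hc. rewrite -natr1.
case: ts IH => [|x s] IH.
  rewrite big_nil /=; lra.
have [t [Ht [Hm Hs]]] := @maxG height (x :: s) ltac:(discriminate).
rewrite Hm. have := (proj1 (List.Forall_forall _ _) IH) t Ht.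
have : 0 <= (size s)%:R :> rat := ler0n _ _. rewrite /= in Hs. lra.
Qed.

Lemma ramif_ge t : (ramif t)%:R - 1 / 2 <= rho t.
Proof.
elim/ctree_ind': t => l ts IH; rewrite rho_node ramif_node.
move: (if l == 0%N then _ else _) (c_ge l) => c Hc.
case: ts IH => [|x [|y s]] IH /=.
- rewrite big_nil; lra.
- rewrite big_cons big_nil; inversion IH; subst; lra.
- have [t [Ht [Hm Hs]]] := @maxG ramif (x :: y :: s) ltac:(discriminate).
  rewrite /= in Hm Hs. rewrite Hm -natr1.
  have := (proj1 (List.Forall_forall _ _) IH) t Ht.
  have : 0 <= (size s)%:R :> rat := ler0n _ _.
  rewrite -natr1 in Hs. have := rho_ge t. lra.
Qed.

Lemma dbl_ge1 t : (1 <= dbl t)%N.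
Proof.
elim/ctree_ind': t => l ts IH; rewrite dbl_node.
case E: (map dbl ts) => [//|a r].
have [t [Ht [Hm _]]] := @maxG dbl ts ltac:(by move=> Ets; rewrite Ets in E).
rewrite -E Hm /=.
have := (proj1 (List.Forall_forall _ _) IH) t Ht.
by case: ifP => // _ /leq_trans; apply.
Qed.

Lemma dbl_ge t : (2 ^ (dbl t).-1)%:R - 1 / 2 <= rho t.
Proof.
elim/ctree_ind': t => l ts IH; rewrite rho_node dbl_node.
move: (if l == 0%N then _ else _) (c_ge l) => c Hc.
have IH' := proj1 (List.Forall_forall _ _) IH.
case E: (map dbl ts) => [|a r].
  by rewrite /= expn0; have := sum_ge0 ts; lra.
rewrite -E /=.
have [t [Ht [Hm Hs]]] := @maxG dbl ts ltac:(by move=> Ets; rewrite Ets in E).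
have Hs2 : rho t <= \sum_(t <- ts) rho t.
  have : 0 <= (size ts).-1%:R :> rat := ler0n _ _. lra.
have d1 := dbl_ge1 t.
case: ifP => [H2|_].
  have [t1 [t2 [I1 [I2 [H1 [H2' Hr]]]]]] := @cnt2 dbl _ ts H2.
  have := IH' t1 I1. have := IH' t2 I2. rewrite H1 H2' /=.
  move: d1; rewrite Hm. case: (dbl t) => [//|M] _ /=.
  rewrite expnS natrM. lra.
have := IH' t Ht. rewrite Hm. lra.
Qed.

Lemma U_bound {g : ctree -> nat} {u : Ftree} :
  (1 <= primeU g u)%N ->
  exists t, primeU g u = g t /\ rho t <= rhoU u.
Proof.
rewrite /primeU /rhoU => H.
have [t [_ [Hm Hs]]] := @maxG g u ltac:(by move=> E; rewrite E in H).
exists t; split => //.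
have : 0 <= (size u).-1%:R :> rat := ler0n _ _. lra.
Qed.

Theorem mainTheorem6 (m k : nat) : (1 <= k)%N ->
  (forall tau : Ttree, coloredT m tau ->
     [/\ heightT tau = k -> (k%:R / 2 <= rhoT tau)%R,
         ramifT tau = k -> (k%:R - 1 / 2 <= rhoT tau)%R &
         dblT tau = k -> ((2 ^ k.-1)%:R - 1 / 2 <= rhoT tau)%R]) /\
  (forall u : Ftree, all (colored m) u ->
     [/\ primeU height u = k -> (k%:R / 2 <= rhoU u)%R,
         primeU ramif u = k -> (k%:R - 1 / 2 <= rhoU u)%R &
         primeU dbl u = k -> ((2 ^ k.-1)%:R - 1 / 2 <= rhoU u)%R]).
Proof.
move=> k1; split.
  case=> [t|] _ /=; last by split => Hk; rewrite -Hk in k1.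
  by split => <-; [exact: height_ge | exact: ramif_ge | exact: dbl_ge].
move=> u _; split => Hk; rewrite -Hk in k1 *;
  have [t [-> Ht]] := U_bound k1.
- have := height_ge t; lra.
- have := ramif_ge t; lra.
- have := dbl_ge t; lra.
Qed.
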